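(* Let $G$ be a transitively closed directed acyclic graph on $[n]$ with $G^{un}$ connected. A subgraph $H\subseteq G$ gives a facet $Q_H$ of $\tilde Q_G$ (not containing the origin) if and only if $H^{un}$ is connected and $H=G_{L,R}$ for some partition $[n]=L\sqcup R$.
   Context: Conventions: $G$ is a directed acyclic graph with vertex set $[n]$, every edge $(i,j)$ satisfying $i<j$; subgraphs $H\subseteq G$ have $V(H)=[n]$, $E(H)\subseteq E(G)$; $^{un}$ denotes underlying undirected graph. $Q_H=\mathrm{conv}\{\mathbf e_i-\mathbf e_j:(i,j)\in E(H)\}$, $\tilde Q_G=\mathrm{conv}(\{\mathbf 0\}\cup\{\mathbf e_i-\mathbf e_j:(i,j)\in E(G)\})$ in $\mathbb R^n$. $G$ is transitively closed if $(i,j),(j,k)\in E(G)$ implies $(i,k)\in E(G)$. For disjoint $L,R\subseteq[n]$, $G_{L,R}$ is the subgraph with edge set $\{(i,j)\in E(G):i\in L,j\in R\}$. A facet is a face of codimension 1. *)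

(* Defs.v *)
From HB Require Import structures.
From mathcomp Require Import all_boot all_order all_algebra.
Set Implicit Arguments. Unset Strict Implicit. Unset Printing Implicit Defensive.
Import Order.TTheory GRing.Theory Num.Theory.
Local Open Scope ring_scope.

(* Vertex set [n] is represented by 'I_n; a (directed) graph on [n] is its
   edge set, a finite set of ordered pairs. *)
Definition graph (n : nat) := {set 'I_n * 'I_n}.

(* every edge (i,j) satisfies i < j (hence G is acyclic) *)
Definition dag_edges n (G : graph n) : Prop :=
  forall e, e \in G -> (val e.1 < val e.2)%N.

Definition trans_closed n (G : graph n) : Prop :=
  forall i j k : 'I_n, (i, j) \in G -> (j, k) \in G -> (i, k) \in G.

Definition und_adj n (G : graph n) : rel 'I_n :=
  fun i j => ((i, j) \in G) || ((j, i) \in G).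

Definition und_connected n (G : graph n) : Prop :=
  forall i j : 'I_n, connect (und_adj G) i j.

Definition G_LR n (G : graph n) (L : {set 'I_n}) : graph n :=
  [set e in G | (e.1 \in L) && (e.2 \in ~: L)].

Definition edge_vec (K : realFieldType) n (e : 'I_n * 'I_n) : 'rV[K]_n :=
  delta_mx 0 e.1 - delta_mx 0 e.2.

Definition Q_pts (K : realFieldType) n (H : graph n) : seq 'rV[K]_n :=
  [seq edge_vec K e | e <- enum H].
Definition Qt_pts (K : realFieldType) n (G : graph n) : seq 'rV[K]_n :=
  0 :: Q_pts K G.

Definition conv (K : realFieldType) n (s : seq 'rV[K]_n) : 'rV[K]_n -> Prop :=
  fun x => exists w : 'I_(size s) -> K,
    (forall i, 0 <= w i) /\ \sum_(i < size s) w i = 1 /\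
    x = \sum_(i < size s) w i *: s`_i.

Definition dotv (K : realFieldType) n (c x : 'rV[K]_n) : K :=
  \sum_(j < n) c 0 j * x 0 j.

(* F is a face of P : F = P ∩ {c.x = b} for a valid inequality c.x <= b
   (this includes the empty face and P itself) *)
Definition is_face (K : realFieldType) n (F P : 'rV[K]_n -> Prop) : Prop :=
  exists (c : 'rV[K]_n) (b : K),
    (forall x, P x -> dotv c x <= b) /\
    (forall x, F x <-> (P x /\ dotv c x = b)).

Definition affdim (K : realFieldType) n (s : seq 'rV[K]_n) : int :=
  match s with
  | [::] => -1
  | x0 :: _ => (\rank (\matrix_(i < size s, j < n) (s`_i - x0) 0 j))%:Z
  end.

Definition is_facet (K : realFieldType) n (t s : seq 'rV[K]_n) : Prop :=
  is_face (conv t) (conv s) /\ affdim t = affdim s - 1.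

(* Main.v *)
Require Import Defs.
From HB Require Import structures.
From mathcomp Require Import all_boot all_order all_algebra.
Import Order.TTheory GRing.Theory Num.Theory.
Local Open Scope ring_scope.
From mathcomp Require Import zify ring lra.
Set Implicit Arguments. Unset Strict Implicit. Unset Printing Implicit Defensive.

Section Aux.
Variable K : realFieldType.
Variable n : nat.
Implicit Types (c u x y z : 'rV[K]_n).

Lemma dotvDr c x y : dotv c (x + y) = dotv c x + dotv c y.
Proof. by rewrite /dotv -big_split; apply: eq_bigr => j _; rewrite mxE mulrDr. Qed.
Lemma dotvZr c a x : dotv c (a *: x) = a * dotv c x.
Proof. rewrite /dotv mulr_sumr; apply: eq_bigr => j _; by rewrite mxE mulrCA. Qed.
Lemma dotv0r c : dotv c 0 = 0.
Proof. by rewrite /dotv big1 // => j _; rewrite mxE mulr0. Qed.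
Lemma dotvNr c x : dotv c (- x) = - dotv c x.
Proof. by rewrite -scaleN1r dotvZr mulN1r. Qed.
Lemma dotvBr c x y : dotv c (x - y) = dotv c x - dotv c y.
Proof. by rewrite dotvDr dotvNr. Qed.
Lemma dotv_sumr c m (w : 'I_m -> K) (s : 'I_m -> 'rV[K]_n) :
  dotv c (\sum_(i < m) w i *: s i) = \sum_(i < m) w i * dotv c (s i).
Proof.
rewrite (big_morph (dotv c) (dotvDr c) (dotv0r c)).
by apply: eq_bigr => i _; rewrite dotvZr.
Qed.
Lemma dotv_delta u p : dotv u (delta_mx 0 p) = u 0 p.
Proof.
rewrite /dotv (bigD1 p) //= big1 => [|j /negbTE jp]; rewrite mxE.
  by rewrite !eqxx mulr1 addr0.
by rewrite eqxx /= jp mulr0.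
Qed.
Lemma dotv_edge u (e : 'I_n * 'I_n) : dotv u (edge_vec K e) = u 0 e.1 - u 0 e.2.
Proof. by rewrite /edge_vec dotvBr !dotv_delta. Qed.

Lemma conv_nil x : ~ conv [::] x.
Proof. by case=> w [_ [h _]]; move: h; rewrite big_ord0 => /eqP; rewrite eq_sym oner_eq0. Qed.

Lemma conv_mem s z : z \in s -> conv s z.
Proof.
move=> zs; have i0s : (index z s < size s)%N by rewrite index_mem.
pose i0 : 'I_(size s) := Ordinal i0s.
exists (fun i => (i == i0)%:R); split; first by move=> i; rewrite ler0n.
split.
  rewrite (bigD1 i0) //= eqxx big1 ?addr0 // => i /negbTE ->; done.
rewrite (bigD1 i0) //= eqxx scale1r big1 ?addr0 ?nth_index // => i /negbTE ->.
by rewrite scale0r.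
Qed.

Lemma conv_supp s t x (w : 'I_(size s) -> K) :
  (forall i, 0 <= w i) -> \sum_i w i = 1 -> x = \sum_i w i *: s`_i ->
  (forall i, w i != 0 -> s`_i \in t) -> conv t x.
Proof.
move=> w0 w1 xE wt.
pose p i := index s`_i t.
have key (R : Type) (zero : R) (op : Monoid.com_law zero) (F : 'I_(size s) -> 'rV[K]_n -> R) :
    (forall i v, w i = 0 -> F i v = zero) ->
    \big[op/zero]_(j < size t) \big[op/zero]_(i : 'I_(size s) | p i == j) F i t`_j =
    \big[op/zero]_(i < size s) F i s`_i.
  move=> F0; rewrite (exchange_big_dep xpredT) //=; apply: eq_bigr => i _.
  case: (eqVneq (w i) 0) => [wi0|wi]; first by rewrite big1 ?F0 // => j _; apply: F0.
  have pit : (p i < size t)%N by rewrite index_mem wt.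
  rewrite (big_pred1 (Ordinal pit)) /=; first by rewrite nth_index // wt.
  by move=> j /=; rewrite -val_eqE /= eq_sym.
exists (fun j : 'I_(size t) => \sum_(i : 'I_(size s) | p i == j) w i); split.
  by move=> j; apply: sumr_ge0.
split.
  by rewrite (key _ _ _ (fun i v => w i)).
rewrite xE (eq_bigr (fun j : 'I_(size t) => \sum_(i : 'I_(size s) | p i == j) w i *: t`_j)); last first.
  by move=> j _; rewrite scaler_suml.
by rewrite (key _ _ _ (fun i v => w i *: v)) // => i v ->; rewrite scale0r.
Qed.

Lemma conv_dot_le s c b x : (forall z, z \in s -> dotv c z <= b) -> conv s x -> dotv c x <= b.
Proof.
move=> sb [w [w0 [w1 ->]]]; rewrite dotv_sumr.
rewrite -[b]mul1r -w1 mulr_suml; apply: ler_sum => i _.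
by rewrite ler_wpM2l // sb // mem_nth.
Qed.

Lemma conv_dot_const s c b x : (forall z, z \in s -> dotv c z = b) -> conv s x -> dotv c x = b.
Proof.
move=> sb [w [w0 [w1 ->]]]; rewrite dotv_sumr.
rewrite -[b]mul1r -w1 mulr_suml; apply: eq_bigr => i _.
by rewrite sb // mem_nth.
Qed.

Lemma conv_dot_eq s c b x (w : 'I_(size s) -> K) :
  (forall i, 0 <= w i) -> \sum_i w i = 1 -> x = \sum_i w i *: s`_i ->
  (forall z, z \in s -> dotv c z <= b) -> dotv c x = b ->
  forall i, w i != 0 -> dotv c s`_i = b.
Proof.
move=> w0 w1 xE sb xb i wi.
have h : \sum_i w i * (b - dotv c s`_i) = 0.
  rewrite (eq_bigr (fun i => w i * b - w i * dotv c s`_i)); last by move=> j _; rewrite mulrBr.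
  by rewrite sumrB -mulr_suml w1 mul1r -dotv_sumr -xE xb subrr.
have hp : forall j : 'I_(size s), true -> 0 <= w j * (b - dotv c s`_j).
  by move=> j _; rewrite mulr_ge0 // subr_ge0 sb // mem_nth.
have := @psumr_eq0P _ _ xpredT _ hp h i isT.
by move/eqP; rewrite mulf_eq0 (negbTE wi) /= subr_eq0 => /eqP <-.
Qed.

Definition Md (s : seq 'rV[K]_n) x0 := \matrix_(i < size s, j < n) (s`_i - x0) 0 j.

Lemma affdimE x0 s : affdim (x0 :: s) = (\rank (Md (x0 :: s) x0))%:Z.
Proof. by []. Qed.

Lemma rank_Md s x0 : \rank (Md s x0) = (n - \rank (kermx (Md s x0)^T))%N.
Proof. by rewrite mxrank_ker mxrank_tr subKn // rank_leq_col. Qed.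

Lemma Md_entry s x0 y i : (y *m (Md s x0)^T) 0 i = dotv y s`_i - dotv y x0.
Proof.
rewrite mxE /dotv -sumrB; apply: eq_bigr => j _; by rewrite !mxE mulrBr.
Qed.

Lemma Md_kerP s x0 y :
  (y <= kermx (Md s x0)^T)%MS <-> (forall z, z \in s -> dotv y z = dotv y x0).
Proof.
split.
  move/sub_kermxP => h z zs.
  have i0s : (index z s < size s)%N by rewrite index_mem.
  have := congr1 (fun M : 'M[K]_(1, size s) => M 0 (Ordinal i0s)) h.
  by rewrite Md_entry mxE /= nth_index // => /eqP; rewrite subr_eq0 => /eqP.
move=> h; apply/sub_kermxP/matrixP => a i; rewrite ord1 Md_entry mxE.
by rewrite h ?subrr // mem_nth.
Qed.

Lemma rank_ge k m (W : 'M[K]_(m, n)) (f g : 'I_k -> 'rV[K]_n) :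
  (forall i, (f i <= W)%MS) -> (forall i j, dotv (f i) (g j) = (i == j)%:R) ->
  (k <= \rank W)%N.
Proof.
move=> fW fg.
pose B : 'M[K]_(k, n) := \matrix_(i, j) f i 0 j.
pose C : 'M[K]_(n, k) := \matrix_(j, i) g i 0 j.
have BC : B *m C = 1%:M.
  apply/matrixP => i j; rewrite !mxE -fg /dotv; apply: eq_bigr => l _.
  by rewrite !mxE.
have BW : (B <= W)%MS.
  apply/row_subP => i; have -> : row i B = f i by apply/rowP => j; rewrite !mxE.
  exact: fW.
rewrite -{1}(mxrank1 K k) -BC.
exact: leq_trans (mxrankM_maxl _ _) (mxrankS BW).
Qed.

Definition ones : 'rV[K]_n := const_mx 1.
Definition indv (S : {set 'I_n}) : 'rV[K]_n := \row_j (j \in S)%:R.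

Lemma conn_const (H : graph n) (z : 'I_n -> K) :
  (forall e, e \in H -> z e.1 = z e.2) ->
  forall a b, connect (und_adj H) a b -> z a = z b.
Proof.
move=> Hz a b /connectP [p]; elim: p a => [|c p IH] a /=; first by move=> _ ->.
move=> /andP [adj pth] eb; transitivity (z c); last exact: IH.
by case/orP: adj => h; [exact: (Hz _ h) | exact/esym/(Hz _ h)].
Qed.

Lemma mem_Qpts (H : graph n) z :
  z \in Q_pts K H -> exists2 e, e \in H & z = edge_vec K e.
Proof. by case/mapP => e; rewrite mem_enum => eH ->; exists e. Qed.

Lemma Qpts_mem (H : graph n) e : e \in H -> edge_vec K e \in Q_pts K H.
Proof. by move=> eH; apply: map_f; rewrite mem_enum. Qed.


Lemma dotvNl c x : dotv (- c) x = - dotv c x.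
Proof. by rewrite /dotv -sumrN; apply: eq_bigr => j _; rewrite mxE mulNr. Qed.
Lemma dotv0l x : dotv 0 x = 0.
Proof. by rewrite /dotv big1 // => j _; rewrite mxE mul0r. Qed.

Lemma conv_sub s t x : {subset s <= t} -> conv s x -> conv t x.
Proof.
move=> st [w [w0 [w1 xE]]]; apply: (conv_supp w0 w1 xE) => i _.
by apply: st; rewrite mem_nth.
Qed.

Lemma part_le (a b i : 'I_n) : a != b ->
  ((a == i)%:R - (b == i)%:R <= 1 :> K) /\ ((a == i)%:R - (b == i)%:R = 1 :> K -> a = i).
Proof.
move=> ab; case: (eqVneq a i) => [<-|ai].
  by rewrite eq_sym (negbTE ab) subr0.
case: (b == i) => /=; (split; [lra | move=> h; exfalso; lra]).
Qed.

Section Main.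
Variable G : graph n.
Hypothesis dagG : dag_edges G.
Hypothesis connG : und_connected G.

Lemma affdim_Qt : affdim (Qt_pts K G) = (n.-1)%:Z.
Proof.
rewrite /Qt_pts affdimE; congr Posz.
case: (posnP n) => [n0|npos].
  have := rank_leq_col (Md (0 :: Q_pts K G) 0); move: (\rank _) => r.
  by rewrite n0 leqn0 => /eqP.
rewrite rank_Md -subn1; congr subn.
have kerE y : (y <= kermx (Md (0 :: Q_pts K G) 0)^T)%MS <->
     (forall e, e \in G -> y 0 e.1 = y 0 e.2).
  rewrite Md_kerP; split.
    move=> h e eG; have /h : edge_vec K e \in 0 :: Q_pts K G by rewrite inE Qpts_mem ?orbT.
    by rewrite dotv_edge dotv0r => /eqP; rewrite subr_eq0 => /eqP.
  move=> h z; rewrite inE => /orP [/eqP ->|/mem_Qpts [e eG ->]] //.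
  by rewrite dotv_edge dotv0r h // subrr.
pose v0 : 'I_n := Ordinal npos.
apply/eqP; rewrite eqn_leq; apply/andP; split.
  apply: leq_trans (rank_leq_row ones).
  apply: mxrankS; apply/row_subP => i.
  suff gen y : (y <= kermx (Md (0 :: Q_pts K G) 0)^T)%MS -> (y <= ones)%MS.
    by apply: gen; apply: row_sub.
  move/kerE => yc.
  have -> : y = y 0 v0 *: ones.
    apply/rowP => j; rewrite [RHS]mxE mxE mulr1.
    by apply: (@conn_const _ (fun k => y 0 k) yc); apply: connG.
  by apply: scalemx_sub.
apply: (@rank_ge 1 _ _ (fun _ => ones) (fun _ => delta_mx 0 v0)).
  by move=> _; apply/kerE => e _; rewrite !mxE.
by move=> i j; rewrite !ord1 eqxx dotv_delta mxE.
Qed.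

Lemma facet_empty : is_facet (Q_pts K set0) (Qt_pts K G) <-> (n <= 1)%N.
Proof.
have QE : Q_pts K (set0 : graph n) = [::] by rewrite /Q_pts enum_set0.
rewrite /is_facet QE affdim_Qt /=.
split.
  by move=> [_ h]; move: h; lia.
move=> h; split; last by lia.
exists 0, 1; split; first by move=> x _; rewrite dotv0l ler01.
move=> x; split; first by move/conv_nil.
by move=> [_]; rewrite dotv0l => /eqP; rewrite eq_sym oner_eq0.
Qed.

Lemma rhs_empty :
  (und_connected (set0 : graph n) /\ exists L, (set0 : graph n) = G_LR G L) <-> (n <= 1)%N.
Proof.
split.
  move=> [conn _]; case: (leqP n 1) => // n1.
  have i0 : (0 < n)%N by lia.
  have := conn (Ordinal i0) (Ordinal n1) => /connectP [[|c p]] /=.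
    by move=> _ /(congr1 val).
  by rewrite /und_adj !inE.
move=> n1; split.
  move=> i j; have -> : i = j by apply: ord_inj; have := ltn_ord i; have := ltn_ord j; lia.
  exact: connect0.
by exists set0; apply/setP => e; rewrite /G_LR !inE /= andbF.
Qed.

Variable H : graph n.
Hypothesis HG : H \subset G.

Lemma affdim_QH h0 r : enum H = h0 :: r ->
  affdim (Q_pts K H) = (n - \rank (kermx (Md (Q_pts K H) (edge_vec K h0))^T))%:Z.
Proof.
move=> E; have QE : Q_pts K H = edge_vec K h0 :: map (@edge_vec K n) r by rewrite /Q_pts E.
by rewrite QE affdimE rank_Md.
Qed.

Lemma kerH h0 y : (y <= kermx (Md (Q_pts K H) (edge_vec K h0))^T)%MS <->
  (forall e, e \in H -> y 0 e.1 - y 0 e.2 = y 0 h0.1 - y 0 h0.2).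
Proof.
rewrite Md_kerP; split.
  by move=> h e eH; rewrite -!dotv_edge h // Qpts_mem.
by move=> h z /mem_Qpts [e eH ->]; rewrite !dotv_edge h.
Qed.

Lemma indvE (L : {set 'I_n}) k : indv L 0 k = (k \in L)%:R.
Proof. by rewrite mxE. Qed.

Lemma dir_left h0 r L : enum H = h0 :: r -> und_connected H -> H = G_LR G L ->
  is_facet (Q_pts K H) (Qt_pts K G).
Proof.
move=> E connH HE.
have h0H : h0 \in H by rewrite -mem_enum E mem_head.
have HL e : e \in H -> [/\ e \in G, e.1 \in L & e.2 \notin L].
  by rewrite HE /G_LR !inE => /andP [-> /andP [-> ->]].
have GL e : e \in G -> e.1 \in L -> e.2 \notin L -> e \in H.
  by move=> eG e1 e2; rewrite HE /G_LR !inE eG e1 e2.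
have [h0G h01 h02] := HL _ h0H.
have d0 : (nat_of_ord h0.1 < nat_of_ord h0.2)%N := dagG h0G.
have n2 : (2 <= n)%N by have := ltn_ord h0.2; lia.
split.
  exists (indv L), 1.
  have valid : forall z, z \in Qt_pts K G -> dotv (indv L) z <= 1.
    move=> z; rewrite inE => /orP [/eqP ->|/mem_Qpts [e eG ->]]; first by rewrite dotv0r ler01.
    by rewrite dotv_edge !indvE; case: (_ \in L); case: (_ \in L) => /=; lra.
  split; first by move=> x; apply: conv_dot_le.
  move=> x; split.
    move=> xH; split.
      apply: conv_sub xH => z /mem_Qpts [e eH ->].
      by rewrite inE Qpts_mem ?orbT // (subsetP HG).
    apply: conv_dot_const xH => z /mem_Qpts [e eH ->].
    by have [_ e1 e2] := HL _ eH; rewrite dotv_edge !indvE e1 (negbTE e2) /= subr0.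
  case=> [[w [w0 [w1 xE]]] xb].
  apply: (conv_supp w0 w1 xE) => i wi.
  have := conv_dot_eq w0 w1 xE valid xb wi.
  have : (Qt_pts K G)`_i \in Qt_pts K G by apply: mem_nth.
  move: ((Qt_pts K G)`_i) => z.
  rewrite inE => /orP [/eqP ->|/mem_Qpts [e eG ->]].
    by rewrite dotv0r => /eqP; rewrite eq_sym oner_eq0.
  rewrite dotv_edge !indvE => h; apply: Qpts_mem; apply: GL => //; move: h.
    by case: (_ \in L); case: (_ \in L) => //=; lra.
  by case: (_ \in L); case: (_ \in L) => //=; lra.
rewrite affdim_Qt (affdim_QH E).
suff -> : \rank (kermx (Md (Q_pts K H) (edge_vec K h0))^T) = 2%N by lia.
apply/eqP; rewrite eqn_leq; apply/andP; split.
  apply: (@leq_trans (\rank (ones + indv L)%MS)).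
    apply: mxrankS; apply/row_subP => i.
    suff gen y : (y <= kermx (Md (Q_pts K H) (edge_vec K h0))^T)%MS ->
        (y <= ones + indv L)%MS by apply: gen; apply: row_sub.
    move/kerH => yc.
    set kap := y 0 h0.1 - y 0 h0.2.
    pose z k := y 0 k - kap * (k \in L)%:R.
    have zc : forall e, e \in H -> z e.1 = z e.2.
      move=> e eH; have [_ e1 e2] := HL _ eH; have := yc _ eH.
      rewrite /z e1 (negbTE e2) /=; rewrite /kap; lra.
    have -> : y = z h0.1 *: ones + kap *: indv L.
      apply/rowP => j; rewrite [RHS]mxE [X in _ = X + _]mxE [X in _ = _ + X]mxE.
      by rewrite indvE [ones 0 j]mxE mulr1 -(conn_const zc (connH j h0.1)) /z subrK.
    by apply: addmx_sub_adds; apply: scalemx_sub.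
  have [le _] := mxrank_adds_leqif ones (indv L).
  apply: leq_trans le _.
  by rewrite -[2%N]/(1+1)%N; apply: leq_add; apply: rank_leq_row.
apply: (@rank_ge 2%N _ _ (fun i => [:: ones; indv L]`_i)
         (fun i => [:: delta_mx 0 h0.2; edge_vec K h0]`_i)).
  case=> [[|[|i]] Hi] //=; apply/kerH => e eH; rewrite ?mxE //.
  by have [_ e1 e2] := HL _ eH; rewrite e1 (negbTE e2) h01 (negbTE h02).
case=> [[|[|i]] Hi] //=; case=> [[|[|j]] Hj] //=;
  rewrite ?dotv_delta ?dotv_edge ?indvE ?mxE ?h01 ?(negbTE h02) /=; lra.
Qed.

Lemma edge_entry (e : 'I_n * 'I_n) k : edge_vec K e 0 k = (e.1 == k)%:R - (e.2 == k)%:R.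
Proof. by rewrite !mxE /= (eq_sym k) (eq_sym k). Qed.

Lemma dir_right h0 r : trans_closed G -> enum H = h0 :: r ->
  is_facet (Q_pts K H) (Qt_pts K G) -> und_connected H /\ exists L, H = G_LR G L.
Proof.
move=> transG E [[c [b [cv face]]] dimE].
have h0H : h0 \in H by rewrite -mem_enum E mem_head.
have h0G : h0 \in G by apply: (subsetP HG).
have inQt e : e \in G -> edge_vec K e \in Qt_pts K G.
  by move=> eG; rewrite inE Qpts_mem ?orbT.
have F1 e : e \in H -> dotv c (edge_vec K e) = b.
  by move=> eH; have [_ ->] := (face (edge_vec K e)).1 (conv_mem (Qpts_mem eH)).
have F2 e : e \in G -> dotv c (edge_vec K e) <= b.
  by move=> eG; apply: cv; apply: conv_mem; apply: inQt.
have F3 : 0 <= b by have := cv 0 (conv_mem (mem_head _ _)); rewrite dotv0r.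
pose d : 'rV[K]_n := \row_j (nat_of_ord j)%:R.
have Fd x : conv (Q_pts K H) x -> dotv d x <= -1.
  apply: conv_dot_le => z /mem_Qpts [e eH ->]; rewrite dotv_edge !mxE.
  have de : (nat_of_ord e.1 < nat_of_ord e.2)%N := dagG (subsetP HG _ eH).
  have : (e.1.+1)%:R <= (nat_of_ord e.2)%:R :> K by rewrite ler_nat.
  rewrite -addn1 natrD; lra.
have bpos : 0 < b.
  rewrite lt_def F3 andbT; apply/eqP => b0.
  have h0P : conv (Q_pts K H) 0.
    by apply/(face 0); split; [apply: conv_mem; apply: mem_head | rewrite dotv0r b0].
  by have := Fd 0 h0P; rewrite dotv0r; lra.
have b0 : b != 0 by rewrite gt_eqF.
have F5 e : e \in G -> dotv c (edge_vec K e) = b -> e \in H.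
  move=> eG eb.
  have [w [w0 [w1 xE]]] := (face (edge_vec K e)).2 (conj (conv_mem (inQt _ eG)) eb).
  have ab : e.1 != e.2.
    by apply/eqP => ee; have := dagG eG; rewrite ee ltnn.
  have ba : e.2 != e.1 by rewrite eq_sym.
  have ule z : z \in Q_pts K H -> dotv (edge_vec K e) z <= 2.
    case/mem_Qpts => h hH ->; rewrite dotv_edge !edge_entry.
    have [p1 _] := part_le h.1 ab; have [p2 _] := part_le h.2 ba; lra.
  have u2 : dotv (edge_vec K e) (edge_vec K e) = 2.
    rewrite dotv_edge !edge_entry !eqxx (negbTE ab) (negbTE ba) /=; lra.
  have hw := conv_dot_eq w0 w1 xE ule (_ : dotv (edge_vec K e) (edge_vec K e) = 2).
  move: hw => /(_ u2) hw.
  case: (boolP [exists i, w i != 0]) => [/existsP [i wi] | /existsPn h]; last first.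
    move: w1; rewrite big1 => [/eqP|i _]; first by rewrite eq_sym oner_eq0.
    by apply/eqP; rewrite -[_ == _]negbK h.
  have := hw i wi.
  have : (Q_pts K H)`_i \in Q_pts K H by apply: mem_nth.
  move: ((Q_pts K H)`_i) => z /mem_Qpts [h hH ->].
  rewrite dotv_edge !edge_entry.
  have [p1 q1] := part_le h.1 ab; have [p2 q2] := part_le h.2 ba => eq2.
  have e1 : e.1 = h.1 by apply: q1; lra.
  have e2 : e.2 = h.2 by apply: q2; lra.
  by move: hH; rewrite [h]surjective_pairing -e1 -e2 -surjective_pairing.
have F6 i j k : (i, j) \in H -> (j, k) \in H -> False.
  move=> ij jk.
  have := F2 _ (transG _ _ _ (subsetP HG _ ij) (subsetP HG _ jk)).
  have := F1 _ ij; have := F1 _ jk; rewrite !dotv_edge /=; lra.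
have d0 : (nat_of_ord h0.1 < nat_of_ord h0.2)%N := dagG h0G.
have n2 : (2 <= n)%N by have := ltn_ord h0.2; lia.
have connH : und_connected H.
  case: (boolP [forall i, forall j, connect (und_adj H) i j]) => [/forallP h i j | ].
    exact: (forallP (h i) j).
  move=> /forallPn [a /forallPn [bb nab]]; exfalso.
  rewrite affdim_Qt (affdim_QH E) in dimE.
  have kle := rank_leq_row (kermx (Md (Q_pts K H) (edge_vec K h0))^T).
  suff : (3 <= \rank (kermx (Md (Q_pts K H) (edge_vec K h0))^T))%N by move: dimE kle; lia.
  pose S := [set k | connect (und_adj H) a k].
  have HS e : e \in H -> (e.1 \in S) = (e.2 \in S).
    move=> eH; rewrite !inE; apply/idP/idP => h.
      by apply: connect_trans h (connect1 _); rewrite /und_adj -surjective_pairing eH.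
    by apply: connect_trans h (connect1 _); rewrite /und_adj -surjective_pairing eH orbT.
  have aS : a \in S by rewrite inE connect0.
  have bS : bb \notin S by rewrite inE.
  pose gg p := delta_mx 0 p - (c 0 p / b) *: edge_vec K h0.
  have hc : c 0 h0.1 - c 0 h0.2 = b by rewrite -dotv_edge F1.
  have hS : (h0.1 \in S)%:R - (h0.2 \in S)%:R = 0 :> K by rewrite (HS h0 h0H) subrr.
  apply: (@rank_ge 3%N _ _ (fun i => [:: ones; indv S; c]`_i)
         (fun i => [:: gg bb; gg a - gg bb; b^-1 *: edge_vec K h0]`_i)).
    case=> [[|[|[|i]]] Hi] //=; apply/kerH => e eH; rewrite ?mxE //.
      by rewrite (HS e eH) (HS h0 h0H) !subrr.
    by rewrite -!dotv_edge !F1.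
  case=> [[|[|[|i]]] Hi] //=; case=> [[|[|[|j]]] Hj] //=;
    rewrite /gg ?dotvBr ?dotvZr ?dotv_delta ?dotv_edge ?indvE ?mxE ?hc ?hS
      ?(negbTE bS) ?aS /= ?divfK ?mulVf //; lra.
split => //.
pose L := [set i | [exists j, (i, j) \in H]].
have HL e : e \in H -> e.1 \in L /\ e.2 \notin L.
  case: e => i j ijH; split; rewrite inE /=.
    by apply/existsP; exists j.
  by apply/existsP => [[k jk]]; apply: (F6 _ _ _ ijH jk).
clearbody L; exists L; apply/setP => e; case: e => i j.
rewrite /G_LR inE in_setC /=; apply/idP/idP.
  move=> ijH; have [iL jL] := HL _ ijH; by rewrite (subsetP HG _ ijH) iL jL.
case/andP => ijG /andP [iL jL]; apply: F5 => //.
pose z k := c 0 k - b * (k \in L)%:R.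
have zc : forall e, e \in H -> z e.1 = z e.2.
  move=> e eH; have [e1 e2] := HL _ eH; have := F1 _ eH.
  rewrite dotv_edge /z e1 (negbTE e2) /=; lra.
have := conn_const zc (connH i j); rewrite dotv_edge /z iL (negbTE jL) /=; lra.
Qed.

End Main.

End Aux.

Theorem mainTheorem16 (K : realFieldType) (n : nat) (G H : graph n) :
  dag_edges G -> trans_closed G -> und_connected G -> H \subset G ->
  (is_facet (Q_pts K H) (Qt_pts K G) <->
   (und_connected H /\ exists L : {set 'I_n}, H = G_LR G L)).
Proof.
move=> dagG transG connG HG.
case E: (enum H) => [|h0 r].
  have H0 : H = set0 by apply/setP => x; rewrite -mem_enum E inE.
  rewrite H0 (facet_empty K connG) (rhs_empty G); done.
split; first exact: (dir_right dagG connG HG transG E).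
by case=> connH [L HL]; apply: (dir_left K dagG connG HG E connH HL).
Qed.
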